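(* In the calculus $\lambda^{RE}$ described in the context, parallel reduction is a forward simulation: if $e_1\Rrightarrow e_2$ and $e_1\to e_1'$, then there exists $e_2'$ such that $e_2\to^*e_2'$ and $e_1'\Rrightarrow e_2'$.
   Context: Syntax of $\lambda^{RE}$. Basic types $b ::= \mathsf{Bool}\mid\mathsf{Unit}$. Constants $c ::= \mathsf{true}\mid\mathsf{false}\mid\mathsf{unit}\mid (=_b)\mid (=_{(c,b)})$. Expressions $e ::= c\mid x\mid e\ e\mid \lambda x{:}\tau.\,e\mid \mathsf{BEq}_b\ e\ e\ e\mid \mathsf{XEq}_{x:\tau\to\tau}\ e\ e\ e$. Values $v ::= c\mid \lambda x{:}\tau.\,e\mid \mathsf{BEq}_b\ e\ e\ v\mid \mathsf{XEq}_{x:\tau\to\tau}\ e\ e\ v$. Types $\tau ::= \{x{:}b\mid e\}\mid x{:}\tau\to\tau\mid \mathsf{PEq}_{\tau}\{e\}\{e\}$. $e[x:=e']$ is capture-avoiding substitution. Reduction: evaluation contexts $E ::= \bullet\mid E\ e\mid v\ E\mid \mathsf{BEq}_b\ e\ e\ E\mid\mathsf{XEq}_{x:\tau\to\tau}\ e\ e\ E$; $E[e]\to E[e']$ if $e\to e'$; $(\lambda x{:}\tau.\,e)\ v\to e[x:=v]$; $(=_b)\ c_1\to(=_{(c_1,b)})$; $(=_{(c_1,b)})\ c_2\to\mathsf{true}$ if $c_1,c_2$ syntactically equal, else $\to\mathsf{false}$. $\to^*$ is the reflexive–transitive closure. Parallel reduction $e\Rrightarrow e'$ and $\tau\Rrightarrow\tau'$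 is defined inductively: $x\Rrightarrow x$; $c\Rrightarrow c$; $\lambda x{:}\tau.e\Rrightarrow\lambda x{:}\tau'.e'$ if $\tau\Rrightarrow\tau'$, $e\Rrightarrow e'$; $e_1\ e_2\Rrightarrow e_1'\ e_2'$ if $e_i\Rrightarrow e_i'$; $(\lambda x{:}\tau.e)\ v\Rrightarrow e'[x:=v']$ if $e\Rrightarrow e'$ and $v\Rrightarrow v'$; $(=_b)\ c_1\Rrightarrow(=_{(c_1,b)})$; $(=_{(c_1,b)})\ c_2\Rrightarrow d$ where $d=\mathsf{true}$ if $c_1,c_2$ are syntactically equal and $\mathsf{false}$ otherwise; $\mathsf{BEq}_b\ e_l\ e_r\ e\Rrightarrow\mathsf{BEq}_b\ e_l'\ e_r'\ e'$ if $e_l\Rrightarrow e_l'$, $e_r\Rrightarrow e_r'$, $e\Rrightarrow e'$; $\mathsf{XEq}_{x:\tau_x\to\tau}\ e_l\ e_r\ e\Rrightarrow\mathsf{XEq}_{x:\tau_x'\to\tau'}\ e_l'\ e_r'\ e'$ if all five components parallel reduce; on types: $\{x{:}b\mid r\}\Rrightarrow\{x{:}b\mid r'\}$ if $r\Rrightarrow r'$; $x{:}\tau_x\to\tau\Rrightarrow x{:}\tau_x'\to\tau'$ if $\tau_x\Rrightarrow\tau_x'$, $\tau\Rrightarrow\tau'$; $\mathsf{PEq}_\tau\{e_l\}\{e_r\}\Rrightarrow\mathsf{PEq}_{\tau'}\{e_l'\}\{e_r'\}$ if all components parallel reduce. *)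

(* Defs.v *)
From Stdlib Require Import Arith PeanoNat.

Inductive basic : Type := BBool | BUnit.

Inductive const : Type :=
| CTrue | CFalse | CUnit
| CEq (b : basic)
| CEqC (c : const) (b : basic).

(* Binders: Lam t e binds in e; TRef b r binds in r; TArr tx t binds in t;
   XEq tx t el er e binds only in t (the codomain of the subscript x:tx -> t). *)
Inductive expr : Type :=
| Const (c : const)
| Var (n : nat)
| App (e1 e2 : expr)
| Lam (t : ty) (e : expr)
| BEq (b : basic) (el er e : expr)
| XEq (tx t : ty) (el er e : expr)
with ty : Type :=
| TRef (b : basic) (r : expr)      (* {x:b | r} *)
| TArr (tx t : ty)
| TPEq (t : ty) (el er : expr).

Fixpoint shift_e (d c : nat) (e : expr) : expr :=
  match e with
  | Const k => Const k
  | Var n => if n <? c then Var n else Var (n + d)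
  | App e1 e2 => App (shift_e d c e1) (shift_e d c e2)
  | Lam t e => Lam (shift_t d c t) (shift_e d (S c) e)
  | BEq b el er e => BEq b (shift_e d c el) (shift_e d c er) (shift_e d c e)
  | XEq tx t el er e =>
      XEq (shift_t d c tx) (shift_t d (S c) t)
          (shift_e d c el) (shift_e d c er) (shift_e d c e)
  end
with shift_t (d c : nat) (t : ty) : ty :=
  match t with
  | TRef b r => TRef b (shift_e d (S c) r)
  | TArr tx t => TArr (shift_t d c tx) (shift_t d (S c) t)
  | TPEq t el er => TPEq (shift_t d c t) (shift_e d c el) (shift_e d c er)
  end.

(* capture-avoiding substitution of s for index k (indices above k are decremented) *)
Fixpoint subst_e (k : nat) (s : expr) (e : expr) : expr :=
  match e with
  | Const c => Const c
  | Var n => if n <? k then Var n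
             else if n =? k then shift_e k 0 s
             else Var (pred n)
  | App e1 e2 => App (subst_e k s e1) (subst_e k s e2)
  | Lam t e => Lam (subst_t k s t) (subst_e (S k) s e)
  | BEq b el er e => BEq b (subst_e k s el) (subst_e k s er) (subst_e k s e)
  | XEq tx t el er e =>
      XEq (subst_t k s tx) (subst_t (S k) s t)
          (subst_e k s el) (subst_e k s er) (subst_e k s e)
  end
with subst_t (k : nat) (s : expr) (t : ty) : ty :=
  match t with
  | TRef b r => TRef b (subst_e (S k) s r)
  | TArr tx t => TArr (subst_t k s tx) (subst_t (S k) s t)
  | TPEq t el er => TPEq (subst_t k s t) (subst_e k s el) (subst_e k s er)
  end.

Definition subst0 (e v : expr) : expr := subst_e 0 v e.

Inductive value : expr -> Prop :=
| V_Const c : value (Const c)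
| V_Lam t e : value (Lam t e)
| V_BEq b el er v : value v -> value (BEq b el er v)
| V_XEq tx t el er v : value v -> value (XEq tx t el er v).

Inductive step : expr -> expr -> Prop :=
| S_AppL e1 e1' e2 : step e1 e1' -> step (App e1 e2) (App e1' e2)
| S_AppR v e e' : value v -> step e e' -> step (App v e) (App v e')
| S_BEq b el er e e' : step e e' -> step (BEq b el er e) (BEq b el er e')
| S_XEq tx t el er e e' : step e e' -> step (XEq tx t el er e) (XEq tx t el er e')
| S_Beta t e v : value v -> step (App (Lam t e) v) (subst0 e v)
| S_Eq1 b c1 : step (App (Const (CEq b)) (Const c1)) (Const (CEqC c1 b))
| S_EqT b c1 c2 : c1 = c2 ->
    step (App (Const (CEqC c1 b)) (Const c2)) (Const CTrue)
| S_EqF b c1 c2 : c1 <> c2 ->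
    step (App (Const (CEqC c1 b)) (Const c2)) (Const CFalse).

Inductive star : expr -> expr -> Prop :=
| star_refl e : star e e
| star_step e1 e2 e3 : step e1 e2 -> star e2 e3 -> star e1 e3.

Inductive par_e : expr -> expr -> Prop :=
| P_Var n : par_e (Var n) (Var n)
| P_Const c : par_e (Const c) (Const c)
| P_Lam t t' e e' : par_t t t' -> par_e e e' -> par_e (Lam t e) (Lam t' e')
| P_App e1 e1' e2 e2' : par_e e1 e1' -> par_e e2 e2' -> par_e (App e1 e2) (App e1' e2')
| P_Beta t e e' v v' : value v -> par_e e e' -> par_e v v' ->
    par_e (App (Lam t e) v) (subst0 e' v')
| P_Eq1 b c1 : par_e (App (Const (CEq b)) (Const c1)) (Const (CEqC c1 b))
| P_EqT b c1 c2 : c1 = c2 ->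
    par_e (App (Const (CEqC c1 b)) (Const c2)) (Const CTrue)
| P_EqF b c1 c2 : c1 <> c2 ->
    par_e (App (Const (CEqC c1 b)) (Const c2)) (Const CFalse)
| P_BEq b el el' er er' e e' : par_e el el' -> par_e er er' -> par_e e e' ->
    par_e (BEq b el er e) (BEq b el' er' e')
| P_XEq tx tx' t t' el el' er er' e e' :
    par_t tx tx' -> par_t t t' -> par_e el el' -> par_e er er' -> par_e e e' ->
    par_e (XEq tx t el er e) (XEq tx' t' el' er' e')
with par_t : ty -> ty -> Prop :=
| P_TRef b r r' : par_e r r' -> par_t (TRef b r) (TRef b r')
| P_TArr tx tx' t t' : par_t tx tx' -> par_t t t' -> par_t (TArr tx t) (TArr tx' t')
| P_TPEq t t' el el' er er' : par_t t t' -> par_e el el' -> par_e er er' ->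
    par_t (TPEq t el er) (TPEq t' el' er').

(* Main.v *)
Require Import Defs.
From Stdlib Require Import Arith PeanoNat Lia.

Scheme expr_ind2 := Induction for expr Sort Prop with ty_ind2 := Induction for ty Sort Prop.
Combined Scheme expr_ty_ind from expr_ind2, ty_ind2.

Ltac vt := repeat (simpl; match goal with
  | |- context[?a <? ?b] => destruct (Nat.ltb_spec a b)
  | |- context[?a =? ?b] => destruct (Nat.eqb_spec a b) end);
  try (f_equal; lia); try lia.

Ltac ih := f_equal; try (match goal with H : forall _, _ |- _ => solve [apply H; lia] end).
Ltac st := apply expr_ty_ind; intros; simpl;
  try (match goal with |- context[Var] => fail 1 | _ => ih end).

Lemma L4 : (forall e j k c c', c' <= c <= c' + k -> shift_e j c (shift_e k c' e) = shift_e (j+k) c' e)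
 /\ (forall t j k c c', c' <= c <= c' + k -> shift_t j c (shift_t k c' t) = shift_t (j+k) c' t).
Proof. st. vt. Qed.

Lemma L1 : (forall e d d' c c' x, c' <= c -> x = c + d' -> shift_e d x (shift_e d' c' e) = shift_e d' c' (shift_e d c e))
 /\ (forall t d d' c c' x, c' <= c -> x = c + d' -> shift_t d x (shift_t d' c' t) = shift_t d' c' (shift_t d c t)).
Proof. st. subst. vt. Qed.

Lemma L2 : (forall e d k m s x y, x = k + m -> y = S x -> shift_e d x (subst_e k s e) = subst_e k (shift_e d m s) (shift_e d y e))
 /\ (forall t d k m s x y, x = k + m -> y = S x -> shift_t d x (subst_t k s t) = subst_t k (shift_e d m s) (shift_t d y t)).
Proof. st. subst. vt.
  subst. apply (proj1 L1); lia. Qed.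

Lemma L5 : (forall s u j m c, c <= j <= c + m -> subst_e j u (shift_e (S m) c s) = shift_e m c s)
 /\ (forall t u j m c, c <= j <= c + m -> subst_t j u (shift_t (S m) c t) = shift_t m c t).
Proof. st. vt. Qed.

Lemma L3 : (forall v s j k c x, c <= k -> x = j + k -> subst_e x s (shift_e j c v) = shift_e j c (subst_e k s v))
 /\ (forall t s j k c x, c <= k -> x = j + k -> subst_t x s (shift_t j c t) = shift_t j c (subst_t k s t)).
Proof. st. subst. vt.
  subst. symmetry. apply L4. lia. Qed.

Lemma L6 : (forall e s v j k x, x = j + k -> subst_e x s (subst_e j v e) = subst_e j (subst_e k s v) (subst_e (S x) s e))
 /\ (forall t s v j k x, x = j + k -> subst_t x s (subst_t j v t) = subst_t j (subst_e k s v) (subst_t (S x) s t)).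
Proof. st. subst. vt.
  - subst. apply (proj1 L3); lia.
  - subst. symmetry. apply (proj1 L5). lia.
Qed.

Scheme par_e_ind2 := Induction for par_e Sort Prop with par_t_ind2 := Induction for par_t Sort Prop.
Combined Scheme par_ind from par_e_ind2, par_t_ind2.

Lemma value_shift : forall v, value v -> forall d c, value (shift_e d c v).
Proof. induction 1; intros; simpl; constructor; auto. Qed.

Lemma value_subst : forall v, value v -> forall k s, value (subst_e k s v).
Proof. induction 1; intros; simpl; constructor; auto. Qed.

Lemma par_shift : (forall e e', par_e e e' -> forall d c, par_e (shift_e d c e) (shift_e d c e'))
 /\ (forall t t', par_t t t' -> forall d c, par_t (shift_t d c t) (shift_t d c t')).
Proof.
  apply par_ind; intros; simpl; try (constructor; auto; fail).
  - destruct (n <? c); constructor.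
  - unfold subst0. rewrite (proj1 L2 e' d 0 c v' c (S c)) by lia.
    apply P_Beta; auto. apply value_shift; auto.
  all: try (destruct b; constructor).
  all: try (apply P_EqT; auto). all: try (apply P_EqF; auto).
Qed.

Lemma par_subst : (forall e e', par_e e e' -> forall k s s', par_e s s' -> par_e (subst_e k s e) (subst_e k s' e'))
 /\ (forall t t', par_t t t' -> forall k s s', par_e s s' -> par_t (subst_t k s t) (subst_t k s' t')).
Proof.
  apply par_ind; intros; simpl; try (constructor; auto; fail).
  - destruct (n <? k); [constructor|]. destruct (n =? k); [apply par_shift; auto|constructor].
  - unfold subst0. rewrite (proj1 L6 e' s' v' 0 k k) by lia.
    apply P_Beta; auto. apply value_subst; auto.
  all: try (destruct b; constructor).
  all: try (apply P_EqT; auto). all: try (apply P_EqF; auto).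
Qed.

Lemma par_value : forall v v', par_e v v' -> value v -> value v'.
Proof.
  intros v v' H. induction H; intro Hv; inversion Hv; subst; constructor; auto.
Qed.

Lemma value_nostep : forall v, value v -> forall e, ~ step v e.
Proof. induction 1; intros e0 Hs; inversion Hs; subst; eapply IHvalue; eauto. Qed.

Lemma star_trans : forall a b c, star a b -> star b c -> star a c.
Proof. induction 1; intros; auto. econstructor; eauto. Qed.

Lemma star_appl : forall a a' b, star a a' -> star (App a b) (App a' b).
Proof. induction 1. constructor. econstructor. apply S_AppL; eauto. auto. Qed.
Lemma star_appr : forall v a a', value v -> star a a' -> star (App v a) (App v a').
Proof. induction 2. constructor. econstructor. apply S_AppR; eauto. auto. Qed.
Lemma star_beq : forall b el er a a', star a a' -> star (BEq b el er a) (BEq b el er a').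
Proof. induction 1. constructor. econstructor. apply S_BEq; eauto. auto. Qed.
Lemma star_xeq : forall tx t el er a a', star a a' -> star (XEq tx t el er a) (XEq tx t el er a').
Proof. induction 1. constructor. econstructor. apply S_XEq; eauto. auto. Qed.

Theorem lemmaC5 : forall e1 e2 e1' : expr,
  par_e e1 e2 -> step e1 e1' ->
  exists e2' : expr, star e2 e2' /\ par_e e1' e2'.
Proof.
  intros e1 r e1' Hp Hs. revert r Hp.
  induction Hs; intros r Hp.
  - inversion Hp; subst.
    + destruct (IHHs _ H1) as [x [? ?]]. exists (App x e2'). split.
      apply star_appl; auto. constructor; auto.
    + inversion Hs.
    + inversion Hs.
    + inversion Hs.
    + inversion Hs.
  - inversion Hp; subst.
    + destruct (IHHs _ H4) as [x [? ?]]. exists (App e1' x). split.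
      apply star_appr; auto. eapply par_value; eauto. constructor; auto.
    + exfalso; eapply value_nostep; eauto.
    + inversion Hs.
    + inversion Hs.
    + inversion Hs.
  - inversion Hp; subst. destruct (IHHs _ H6) as [x [? ?]].
    exists (BEq b el' er' x). split. apply star_beq; auto. constructor; auto.
  - inversion Hp; subst. destruct (IHHs _ H9) as [x [? ?]].
    exists (XEq tx' t' el' er' x). split. apply star_xeq; auto. constructor; auto.
  - inversion Hp; subst.
    + inversion H2; subst. eexists. split.
      eapply star_step. apply S_Beta. eapply par_value; eauto. constructor.
      apply par_subst; auto.
    + exists (subst0 e' v'). split. constructor. apply par_subst; auto.
  - inversion Hp; subst.
    + inversion H1; inversion H3; subst. econstructor. split.
      eapply star_step. apply S_Eq1. constructor. constructor.
    + exists (Const (CEqC c1 b)). split; constructor.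
  - inversion Hp; subst.
    + inversion H2; inversion H4; subst. econstructor. split.
      eapply star_step. apply S_EqT; reflexivity. constructor. constructor.
    + exists (Const CTrue). split; constructor.
    + congruence.
  - inversion Hp; subst.
    + inversion H2; inversion H4; subst. econstructor. split.
      eapply star_step. apply S_EqF; eauto. constructor. constructor.
    + congruence.
    + exists (Const CFalse). split; constructor.
Qed.
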